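(* Suppose $n$ is even, $f:\{0,1\}^n\to\mathbb{R}$ is submodular, and $f(x)<0$ for some $x$ with $\|x\|_1=n/2$. Then there are at least $2^{n/2}$ points $y\in\{0,1\}^n$ such that $f(y)\neq 0$.
   Context: $f$ is submodular if $f(x+\mathbf{e}_i)-f(x)\ge f(y+\mathbf{e}_i)-f(y)$ for all $i$ and all $x\le y$ (coordinatewise) with $x_i=y_i=0$, where $\mathbf{e}_i$ is the $i$-th standard basis vector. *)

(* Defs.v *)
From mathcomp Require Import all_boot all_order all_algebra.
From mathcomp Require Import reals.
Set Implicit Arguments. Unset Strict Implicit. Unset Printing Implicit Defensive.
Import Order.TTheory GRing.Theory Num.Theory.
Local Open Scope ring_scope.

(* Points of {0,1}^n are boolean vectors {ffun 'I_n -> bool} (true = 1). *)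
Notation cube n := {ffun 'I_n -> bool}.

Definition cube_le n (x y : cube n) : Prop := forall i, (x i <= y i)%N.

(* x + e_i, used only when x_i = 0: set coordinate i to 1 *)
Definition add_e n (x : cube n) (i : 'I_n) : cube n :=
  [ffun j => if j == i then true else x j].

Definition weight n (x : cube n) : nat := #|[set i | x i]|.

Definition submodular (R : realType) n (f : cube n -> R) : Prop :=
  forall (i : 'I_n) (x y : cube n), cube_le x y -> x i = false -> y i = false ->
    f (add_e y i) - f y <= f (add_e x i) - f x.

(* Main.v *)
Require Import Defs.
From mathcomp Require Import all_boot all_order all_algebra.
From mathcomp Require Import reals.
From mathcomp Require Import lra zify.
Set Implicit Arguments. Unset Strict Implicit.
Import Order.TTheory GRing.Theory Num.Theory.
Local Open Scope ring_scope.

Definition adds n (x : {ffun 'I_n -> bool}) (s : seq 'I_n) : {ffun 'I_n -> bool} :=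
  [ffun j => (j \in s) || x j].

Lemma key (R : realType) n (f : {ffun 'I_n -> bool} -> R) : submodular f ->
  forall (s : seq 'I_n) x y, cube_le x y -> (forall i, i \in s -> y i = false) ->
  (f (adds y s) - f y <= f (adds x s) - f x)%R.
Proof.
move=> sf; elim=> [|i s IH] x y lexy hy.
  have E : forall z : {ffun 'I_n -> bool}, adds z [::] = z by move=> z; apply/ffunP=> j; rewrite ffunE.
  by rewrite !E !subrr.
have hs : forall j, j \in s -> y j = false by move=> j js; apply: hy; rewrite in_cons js orbT.
have IH' := IH x y lexy hs.
case: (boolP (i \in s)) => iS.
  have E : forall z : {ffun 'I_n -> bool}, adds z (i :: s) = adds z s.
    move=> z; apply/ffunP=> j; rewrite !ffunE in_cons.
    by case: eqP => // ->; rewrite iS.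
  by rewrite !E.
have E : forall z : {ffun 'I_n -> bool}, adds z (i :: s) = add_e (adds z s) i.
  move=> z; apply/ffunP=> j; rewrite !ffunE in_cons.
  by case: eqP => // ->; rewrite (negbTE iS).
rewrite !E.
have yi : y i = false by apply: hy; rewrite in_cons eqxx.
have xi : x i = false.
  by move: (lexy i); rewrite yi; case: (x i).
have h := sf i (adds x s) (adds y s).
have le' : cube_le (adds x s) (adds y s).
  move=> j; rewrite !ffunE; case: (j \in s) => //=; exact: lexy.
have := h le'; rewrite !ffunE (negbTE iS) xi yi => /(_ erefl erefl) => h2.
lra.
Qed.

Theorem lemma7 (R : realType) (n : nat) (f : {ffun 'I_n -> bool} -> R) :
  ~~ odd n ->
  submodular f ->
  (exists x : {ffun 'I_n -> bool}, weight x = n./2 /\ f x < 0) ->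
  (2 ^ n./2 <= #|[set y : {ffun 'I_n -> bool} | f y != 0%R]|)%N.
Proof.
move=> ev sf [x0 [wx fx]].
set N := [set y : {ffun 'I_n -> bool} | f y != 0%R].
set S := [set j | x0 j].
have cS : #|S| = n./2 by [].
have cT : #|~: S| = n./2.
  have := cardsC S; rewrite card_ord cS => h.
  have := odd_double_half n; rewrite (negbTE ev) /= -muln2 => h'.
  move: h h'; move: (n./2) (#|~: S|) => k c; lia.
pose mix (D : {set 'I_n}) (v : {ffun 'I_n -> bool}) : {ffun 'I_n -> bool} :=
  [ffun j => if x0 j then j \in D else v j].
case: (boolP [forall D : {set 'I_n}, (D \subset S) ==>
                [exists v : {ffun 'I_n -> bool}, f (mix D v) != 0]]) => H.
- pose r (y : {ffun 'I_n -> bool}) := [set j | y j && x0 j].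
  rewrite -cS -(card_powerset S).
  apply: leq_trans (leq_imset_card r N).
  apply: subset_leq_card; apply/subsetP => D; rewrite powersetE => DS.
  move/forallP: H => /(_ D); rewrite DS /= => /existsP [v fv].
  apply/imsetP; exists (mix D v); first by rewrite inE.
  apply/setP => j; rewrite !inE ffunE.
  case x0j: (x0 j); rewrite ?andbT ?andbF //.
  apply: contraFF x0j => jD.
  by move/subsetP: DS => /(_ j jD); rewrite inE.
- move: H; rewrite negb_forall => /existsP [D]; rewrite negb_imply => /andP [DS].
  rewrite negb_exists => /forallP H0.
  have z : forall v, f (mix D v) = 0.
    by move=> v; move: (H0 v); rewrite negbK => /eqP.
  have DS' : forall j, j \in D -> x0 j.
    by move=> j jD; move/subsetP: DS => /(_ j jD); rewrite inE.
  pose r (y : {ffun 'I_n -> bool}) := [set j | y j && ~~ x0 j].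
  rewrite -cT -(card_powerset (~: S)).
  apply: leq_trans (leq_imset_card r N).
  apply: subset_leq_card; apply/subsetP => E; rewrite powersetE => ES.
  have ES' : forall j, j \in E -> x0 j = false.
    by move=> j jE; move/subsetP: ES => /(_ j jE); rewrite !inE => /negbTE.
  apply/imsetP; exists (adds x0 (enum E)).
    rewrite inE.
    have k := key sf (x := [ffun j => j \in D]) (y := x0) (s := enum E).
    have le : cube_le [ffun j => j \in D] x0.
      move=> j; rewrite ffunE; case jD: (j \in D) => //.
      by rewrite DS'.
    have hy : forall i, i \in enum E -> x0 i = false by move=> i; rewrite mem_enum; exact: ES'.
    have k' := k le hy.
    have e1 : adds [ffun j => j \in D] (enum E) = mix D [ffun j => j \in E].
      apply/ffunP=> j; rewrite !ffunE mem_enum.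
      case x0j: (x0 j).
        by case jE: (j \in E) => //; rewrite ES' in x0j.
      case jD: (j \in D); last by rewrite orbF.
      by rewrite DS' in x0j.
    have e2 : [ffun j => j \in D] = mix D [ffun => false].
      apply/ffunP=> j; rewrite !ffunE.
      case x0j: (x0 j) => //.
      by case jD: (j \in D) => //; rewrite DS' in x0j.
    rewrite e1 e2 !z in k'.
    apply: ltr0_neq0; lra.
  apply/setP => j; rewrite !inE ffunE mem_enum.
  case x0j: (x0 j); rewrite ?andbT ?andbF ?orbF //.
  by apply/negbTE/negP => jE; rewrite ES' in x0j.
Qed.
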